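(* Let $G$ be either the line network $L_n$ with $n\ge 2$ or the ring network $C_n$ with $n\ge 3$. Suppose a group-testing measurement matrix $A$ for $G$ (in the sense defined in the context) distinguishes all binary vectors $x\in\{0,1\}^n$ having at most two ones, meaning that distinct such vectors produce distinct outcome vectors. Then $A$ has at least $n$ rows.
   Context: The line network $L_n$ on nodes $\{1,\dots,n\}$ has edges $\{i,i+1\}$ for $1\le i\le n-1$. The ring network $C_n$ additionally has the edge $\{n,1\}$. A group-testing measurement matrix for a graph $G$ on $\{1,\dots,n\}$ is a matrix $A\in\{0,1\}^{m\times n}$ in which every nonzero row has a support that induces a connected subgraph of $G$. Given $x\in\{0,1\}^n$, the outcome of row $i$ is the Boolean OR $\bigvee_{j:A_{ij}=1}x_j$. *)

(* Defs.v *)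
(* Nodes {1..n} are represented 0-indexed as 'I_n. *)
From mathcomp Require Import all_boot all_order all_algebra.
Set Implicit Arguments. Unset Strict Implicit. Unset Printing Implicit Defensive.

Definition line_adj (n : nat) : rel 'I_n :=
  fun i j => (i.+1 == j :> nat) || (j.+1 == i :> nat).

Definition ring_adj (n : nat) : rel 'I_n :=
  fun i j => [|| line_adj i j,
                 (i == 0 :> nat) && (j == n.-1 :> nat) |
                 (j == 0 :> nat) && (i == n.-1 :> nat)].

Definition induced_connected (n : nat) (G : rel 'I_n) (S : {set 'I_n}) : Prop :=
  forall x y, x \in S -> y \in S ->
    connect [rel u v | [&& u \in S, v \in S & G u v]] x y.

Definition row_support (m n : nat) (A : 'M[bool]_(m, n)) (i : 'I_m) : {set 'I_n} :=
  [set j | A i j].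

Definition gt_matrix_for (m n : nat) (G : rel 'I_n) (A : 'M[bool]_(m, n)) : Prop :=
  forall i : 'I_m, row_support A i != set0 -> induced_connected G (row_support A i).

Definition outcome (m n : nat) (A : 'M[bool]_(m, n)) (x : {ffun 'I_n -> bool})
  : {ffun 'I_m -> bool} :=
  [ffun i => [exists j, A i j && x j]].

Definition weight (n : nat) (x : {ffun 'I_n -> bool}) : nat := #|[set j | x j]|.

Definition distinguishes_le2 (m n : nat) (A : 'M[bool]_(m, n)) : Prop :=
  forall x y : {ffun 'I_n -> bool}, weight x <= 2 -> weight y <= 2 ->
    x != y -> outcome A x != outcome A y.

(* Main.v *)
Require Import Defs.
From mathcomp Require Import all_boot all_order all_algebra.
From mathcomp Require Import zify.

Lemma sep_row m n (A : 'M[bool]_(m,n)) : distinguishes_le2 A ->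
  forall a b : 'I_n, a != b -> exists i, A i b && ~~ A i a.
Proof.
move=> H a b ab.
pose x : {ffun 'I_n -> bool} := [ffun j => (j == a) || (j == b)].
pose y : {ffun 'I_n -> bool} := [ffun j => j == a].
have wx : weight x <= 2.
  rewrite /weight; have -> : [set j | x j] = [set a; b] by apply/setP => j; rewrite !inE ffunE.
  by rewrite cards2; case: (a != b).
have wy : weight y <= 2.
  rewrite /weight; have -> : [set j | y j] = [set a] by apply/setP => j; rewrite !inE ffunE.
  by rewrite cards1.
have xy : x != y.
  apply/eqP => E; have := congr1 (fun f : {ffun _ -> bool} => f b) E; rewrite /= !ffunE eqxx orbT eq_sym (negbTE ab) //.
have := H x y wx wy xy.
case: (pickP (fun i => A i b && ~~ A i a)) => [i Hi|none]; first by exists i.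
move/eqP; case; apply/ffunP => i; rewrite !ffunE.
case Aa: (A i a).
  by apply/idP/idP => _; apply/existsP; exists a; rewrite Aa ffunE eqxx.
have Ab : A i b = false by move: (none i); rewrite Aa andbT.
apply/idP/idP => /existsP [j /andP [Aj]]; rewrite ffunE.
  by case/orP => /eqP E; subst j; rewrite ?Aa ?Ab in Aj.
by move=> /eqP E; subst j; rewrite Aa in Aj.
Qed.

Lemma cross n (G : rel 'I_n) (S : {set 'I_n}) (P : pred 'I_n) u v :
  induced_connected G S -> u \in S -> v \in S -> P u -> ~~ P v ->
  exists x y, [/\ x \in S, y \in S, G x y, P x & ~~ P y].
Proof.
move=> H Su Sv Pu Pv; move: (H u v Su Sv) => /connectP [p pth E].
rewrite E {E v Sv} in Pv.
elim: p u Su Pu pth Pv => /= [|w p IH] u Su Pu.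
  by move=> _; rewrite Pu.
move=> /andP [/and3P [_ Sw Guw] pth] Pv.
case Pw: (P w); first exact: IH pth Pv.
by exists u, w; rewrite Pw.
Qed.

Lemma count_rows m n (A : 'M[bool]_(m,n)) (a : 'I_n -> 'I_n) :
  distinguishes_le2 A -> (forall k, a k != k) ->
  (forall i k l, k != l -> A i k -> A i l -> ~~ A i (a k) -> ~~ A i (a l) -> False) ->
  n <= m.
Proof.
move=> H ak D.
have ex k : exists i, A i k && ~~ A i (a k) by apply: sep_row; rewrite // eq_sym.
pose f k := xchoose (ex k).
have finj : injective f.
  move=> k l fkl; apply/eqP; apply/negP => /negP kl.
  have := xchooseP (ex k); have := xchooseP (ex l).
  rewrite -/(f k) -/(f l) fkl => /andP [h1 h2] /andP [h3 h4].
  exact: (D _ _ _ kl h3 h1 h4 h2).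
by have := @leq_card _ _ f finj; rewrite !card_ord.
Qed.

Lemma line_disj n (S : {set 'I_n.+1}) (k l : 'I_n.+1) :
  1 <= n -> induced_connected (@line_adj n.+1) S -> k != l -> k \in S -> l \in S ->
  (inord (if k == 0 :> nat then 1 else k.-1) : 'I_n.+1) \notin S ->
  (inord (if l == 0 :> nat then 1 else l.-1) : 'I_n.+1) \notin S -> False.
Proof.
move=> n1 H.
wlog kl : k l / k < l.
  move=> W kl; case: (ltngtP k l) => [h|h|h]; first exact: W.
    by move=> Sk Sl Ak Al; apply: (W l k h) => //; rewrite eq_sym.
  by move: kl; rewrite (val_inj h) eqxx.
move=> _ Sk Sl Ak Al.
case: (eqVneq (k : nat) 0) => k0 in Ak *.
- have [x [y [Sx Sy Gxy Px Py]]] :=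
    @cross _ _ _ (fun w : 'I_n.+1 => w < 1) _ _ H Sk Sl (ltac:(simpl; lia)) (ltac:(simpl; lia)).
  move: Gxy Px Py; rewrite /line_adj /= => /orP [] /eqP E Px Py; last lia.
  have yb : y = inord 1 by apply/val_inj; rewrite /= inordK; lia.
  by move: Ak; rewrite -yb Sy.
- have [x [y [Sx Sy Gxy Px Py]]] :=
    @cross _ _ _ (fun w : 'I_n.+1 => w < l) _ _ H Sk Sl (ltac:(simpl; lia)) (ltac:(simpl; lia)).
  move: Gxy Px Py; rewrite /line_adj /= => /orP [] /eqP E Px Py; last lia.
  have l0 : (l == 0 :> nat) = false by apply/eqP; lia.
  rewrite l0 in Al.
  have xb : x = inord l.-1 by apply/val_inj; rewrite /= inordK; have := ltn_ord l; lia.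
  by move: Al; rewrite -xb Sx.
Qed.

Lemma ring_disj n (S : {set 'I_n.+1}) (k l : 'I_n.+1) :
  induced_connected (@ring_adj n.+1) S -> k != l -> k \in S -> l \in S ->
  (inord (if k == 0 :> nat then n else k.-1) : 'I_n.+1) \notin S ->
  (inord (if l == 0 :> nat then n else l.-1) : 'I_n.+1) \notin S -> False.
Proof.
move=> H.
wlog kl : k l / k < l.
  move=> W kl; case: (ltngtP k l) => [h|h|h]; first exact: W.
    by move=> Sk Sl Ak Al; apply: (W l k h) => //; rewrite eq_sym.
  by move: kl; rewrite (val_inj h) eqxx.
move=> _ Sk Sl Ak Al.
have [x [y [Sx Sy Gxy Px Py]]] :=
  @cross _ _ _ (fun w : 'I_n.+1 => (k <= w) && (w < l)) _ _ H Sk Sl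
    (ltac:(simpl; lia)) (ltac:(simpl; lia)).
have l0 : (l == 0 :> nat) = false by apply/eqP; lia.
rewrite l0 in Al.
have ln := ltn_ord l; have xn := ltn_ord x; have yn := ltn_ord y.
move: Gxy Px Py; rewrite /ring_adj /line_adj /= => /or3P [/orP [] /eqP E| /andP [/eqP E1 /eqP E2] | /andP [/eqP E1 /eqP E2]] Px Py.
- have xb : x = inord l.-1 by apply/val_inj; rewrite /= inordK; lia.
  by move: Al; rewrite -xb Sx.
- have k0 : (k == 0 :> nat) = false by apply/eqP; lia.
  rewrite k0 in Ak.
  have yb : y = inord k.-1 by apply/val_inj; rewrite /= inordK; lia.
  by move: Ak; rewrite -yb Sy.
- have k0 : (k == 0 :> nat) = true by apply/eqP; lia.
  rewrite k0 in Ak.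
  have yb : y = inord n by apply/val_inj; rewrite /= inordK; lia.
  by move: Ak; rewrite -yb Sy.
- lia.
Qed.
Theorem mainTheorem2 (n m : nat) (G : rel 'I_n) (A : 'M[bool]_(m, n)) :
  (G = @line_adj n /\ 2 <= n) \/ (G = @ring_adj n /\ 3 <= n) ->
  gt_matrix_for G A ->
  distinguishes_le2 A ->
  n <= m.
Proof.
case: n G A => [|n] G A; first by move=> _ _ _; rewrite leq0n.
move=> HG Hgt Hd.
have conn i (k : 'I_n.+1) : A i k -> induced_connected G (row_support A i).
  move=> Ak; apply: Hgt; apply/set0Pn; exists k; by rewrite inE.
case: HG => [[EG n2]|[EG n3]]; subst G.
- refine (@count_rows m n.+1 A (fun k : 'I_n.+1 => inord (if k == 0 :> nat then 1 else k.-1)) Hd _ _).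
    move=> k; have := ltn_ord k; move=> kn; apply/eqP => /(congr1 val); rewrite /= inordK; case: ifP => /eqP; lia.
  move=> i k l kl Ak Al Nk Nl.
  apply: (@line_disj n (row_support A i) k l) => //; rewrite ?inE //.
  exact: conn Ak.
- refine (@count_rows m n.+1 A (fun k : 'I_n.+1 => inord (if k == 0 :> nat then n else k.-1)) Hd _ _).
    move=> k; have := ltn_ord k; move=> kn; apply/eqP => /(congr1 val); rewrite /= inordK; case: ifP => /eqP; lia.
  move=> i k l kl Ak Al Nk Nl.
  apply: (@ring_disj n (row_support A i) k l) => //; rewrite ?inE //.
  exact: conn Ak.
Qed.
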